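(* Let $(M,d)$ be a bounded hyperconvex metric space and let $T: M\to M$ be an orbitally wrt nonexpansive mapping. Then $F(T)=\{x\in M: Tx=x\}\neq\emptyset$ and $F(T)$ (with the induced metric) is hyperconvex.
   Context: A metric space $(M,d)$ is hyperconvex if for every family of closed balls $\{B(x_i,r_i)\}_{i\in I}$ in $M$ with $d(x_i,x_j)\le r_i+r_j$ for all $i,j$, one has $\bigcap_{i}B(x_i,r_i)\neq\emptyset$. For $x\in M$, $K\subseteq M$, $r_x(K)=\sup\{d(x,y):y\in K\}$; $O_T(y)=\{y,Ty,T^2y,\dots\}$. $T$ is orbitally wrt nonexpansive if $d(Tx,Ty)\le r_x(O_T(y))$ for all $x,y\in M$. *)

(* Defs.v *)
From Stdlib Require Import Reals.
From Coquelicot Require Import Coquelicot.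
Open Scope R_scope.

Definition is_metric {M : Type} (d : M -> M -> R) : Prop :=
  (forall x y, 0 <= d x y) /\
  (forall x y, d x y = 0 <-> x = y) /\
  (forall x y, d x y = d y x) /\
  (forall x y z, d x z <= d x y + d y z).

Definition bounded_metric {M : Type} (d : M -> M -> R) : Prop :=
  exists B : R, forall x y, d x y <= B.

Definition cball {M : Type} (d : M -> M -> R) (x : M) (r : R) (y : M) : Prop :=
  d x y <= r.

Definition hyperconvex_in {M : Type} (d : M -> M -> R) (S : M -> Prop) : Prop :=
  forall (I : Type) (c : I -> M) (r : I -> R),
    (forall i, S (c i)) ->
    (forall i j, d (c i) (c j) <= r i + r j) ->
    exists z, S z /\ forall i, cball d (c i) (r i) z.

Definition hyperconvex {M : Type} (d : M -> M -> R) : Prop :=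
  hyperconvex_in d (fun _ => True).

Definition orbit {M : Type} (T : M -> M) (y : M) (z : M) : Prop :=
  exists n : nat, z = Nat.iter n T y.

Definition rad {M : Type} (d : M -> M -> R) (x : M) (K : M -> Prop) : Rbar :=
  Lub_Rbar (fun t => exists y, K y /\ t = d x y).

Definition orbitally_wrt_nonexpansive {M : Type} (d : M -> M -> R) (T : M -> M) : Prop :=
  forall x y, Rbar_le (d (T x) (T y)) (rad d x (orbit T y)).

Definition fixed_points {M : Type} (T : M -> M) (x : M) : Prop := T x = x.

(* Main.v *)
From mathcomp Require boolp classical_sets.
Require Import Defs.
From Stdlib Require Import Reals.
From Coquelicot Require Import Coquelicot.
From Stdlib Require Import Lra.
Open Scope R_scope.

Lemma zornP (X : Type) (t0 : X) (Rl : X -> X -> Prop) :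
  (forall t, Rl t t) -> (forall r s t, Rl r s -> Rl s t -> Rl r t) ->
  (forall A : X -> Prop, (forall s t, A s -> A t -> Rl s t \/ Rl t s) ->
     exists t, forall s, A s -> Rl s t) ->
  exists t, forall s, Rl t s -> Rl s t.
Proof.
  intros Hr Ht Hc.
  destruct (@classical_sets.ZL_preorder X t0 (fun a b => boolp.asbool (Rl a b)))
    as [t Hm].
  - intro t; apply boolp.asboolT; apply Hr.
  - intros r s t H1 H2; apply boolp.asboolT;
      apply Ht with s; apply boolp.asboolW; assumption.
  - intros A HA. destruct (Hc A) as [t Hu].
    + intros s t Hs Htt. destruct (HA s t Hs Htt) as [H|H];
        [left|right]; apply boolp.asboolW; exact H.
    + exists t; intros s Hs; apply boolp.asboolT; auto.
  - exists t; intros s Hs. apply boolp.asboolW. apply Hm. apply boolp.asboolT; exact Hs.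
Qed.
Section Main.
Variables (M : Type) (d : M -> M -> R) (T : M -> M).
Hypothesis Hmet : is_metric d.
Hypothesis Hhyp : hyperconvex d.
Hypothesis Hbdd : bounded_metric d.
Hypothesis HT : orbitally_wrt_nonexpansive d T.

Definition adm (A : M -> Prop) := forall z,
  (forall c r, (forall a, A a -> d c a <= r) -> d c z <= r) -> A z.
Definition inv (A : M -> Prop) := forall a, A a -> A (T a).

Lemma dsym : forall x y, d x y = d y x.
Proof. destruct Hmet as (_&_&H&_); exact H. Qed.
Lemma dtri : forall x y z, d x z <= d x y + d y z.
Proof. destruct Hmet as (_&_&_&H); exact H. Qed.
Lemma dpos : forall x y, 0 <= d x y.
Proof. destruct Hmet as (H&_); exact H. Qed.
Lemma dzero : forall x y, d x y = 0 <-> x = y.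
Proof. destruct Hmet as (_&H&_); exact H. Qed.

Lemma rad_le (x : M) (K : M -> Prop) (u : R) :
  (forall y, K y -> d x y <= u) -> Rbar_le (rad d x K) u.
Proof.
  intros H. unfold rad. destruct (Lub_Rbar_correct (fun t => exists y, K y /\ t = d x y)) as [_ Hl].
  apply Hl. intros t [y [Ky ->]]. simpl. apply H; exact Ky.
Qed.

Lemma T_le (x y : M) (u : R) :
  (forall n, d x (Nat.iter n T y) <= u) -> d (T x) (T y) <= u.
Proof.
  intros H. pose proof (HT x y) as H1.
  assert (H2 : Rbar_le (rad d x (orbit T y)) u).
  { apply rad_le. intros z [n ->]. apply H. }
  exact (Rbar_le_trans (Finite (d (T x) (T y))) _ (Finite u) H1 H2).
Qed.

Lemma hyp_adm (A : M -> Prop) (Ix : Type) (c : Ix -> M) (r : Ix -> R) :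
  adm A -> (exists a, A a) ->
  (forall i j, d (c i) (c j) <= r i + r j) ->
  (forall i c' r', (forall a, A a -> d c' a <= r') -> d (c i) c' <= r i + r') ->
  exists z, A z /\ forall i, d (c i) z <= r i.
Proof.
  intros HA [a0 Ha0] Hij Hic.
  set (J := {p : M * R | forall a, A a -> d (fst p) a <= snd p}).
  set (c2 := fun k : (Ix + J)%type => match k with inl i => c i | inr p => fst (proj1_sig p) end).
  set (r2 := fun k : (Ix + J)%type => match k with inl i => r i | inr p => snd (proj1_sig p) end).
  destruct (Hhyp (Ix + J)%type c2 r2) as [z [_ Hz]].
  - intros; exact I.
  - intros [i|[[p s] Hp]] [j|[[q t] Hq]]; simpl.
    + apply Hij.
    + apply Hic; exact Hq.
    + rewrite dsym. rewrite Rplus_comm. apply Hic; exact Hp.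
    + apply Rle_trans with (d p a0 + d a0 q). apply dtri.
      apply Rplus_le_compat. apply (Hp a0 Ha0). rewrite dsym; apply (Hq a0 Ha0).
  - exists z; split.
    + apply HA. intros c' r' Hc'. apply (Hz (inr (exist _ (c', r') Hc'))).
    + intro i; apply (Hz (inl i)).
Qed.

Lemma iter_inv (A : M -> Prop) : inv A -> forall n y, A y -> A (Nat.iter n T y).
Proof. intros HA n; induction n; intros y Hy; simpl; auto. Qed.

Record good (A0 : M -> Prop) (A : M -> Prop) : Prop := {
  g_adm : adm A; g_inv : inv A; g_ne : exists a, A a; g_sub : forall x, A x -> A0 x }.

Lemma fixed_in (A0 : M -> Prop) : good A0 A0 -> exists p, A0 p /\ T p = p.
Proof.
  intros G0.
  set (X := {A : M -> Prop | good A0 A}).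
  destruct (@zornP X (exist _ A0 G0) (fun P Q => forall x, proj1_sig Q x -> proj1_sig P x))
    as [[A GA] Hmin].
  - auto.
  - intros r s t H1 H2 x Hx; auto.
  - intros Ch Htot.
    set (B := fun z => A0 z /\ forall Y : X, Ch Y -> proj1_sig Y z).
    assert (GB : good A0 B).
    { destruct G0 as [ad0 inv0 [a0 Ha0] _].
      assert (HadB : adm B).
      { intros z Hz. split.
        - apply ad0. intros c r Hc. apply Hz. intros a [Ha _]; auto.
        - intros Y HY. destruct Y as [Y GY]; simpl. apply (g_adm _ _ GY).
          intros c r Hc. apply Hz. intros a [_ Ha]. apply Hc. apply (Ha _ HY). }
      split.
      - exact HadB.
      - intros a [Ha HY]. split. apply inv0; auto.
        intros Y HYc. destruct Y as [Y GY]; simpl. apply (g_inv _ _ GY).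
        apply (HY _ HYc).
      -
        set (J := {p : M * R | exists Y : X, (Ch Y \/ proj1_sig Y = A0) /\
                     forall a, proj1_sig Y a -> d (fst p) a <= snd p}).
        destruct (Hhyp J (fun p => fst (proj1_sig p)) (fun p => snd (proj1_sig p)))
          as [z [_ Hz]].
        + intros; exact I.
        + intros [[p s] [Y [HY Hp]]] [[q t] [Z [HZ Hq]]]; simpl in *.
          assert (Hc : exists w, proj1_sig Y w /\ proj1_sig Z w).
          { destruct (g_ne _ _ (proj2_sig Y)) as [wy Hwy].
            destruct (g_ne _ _ (proj2_sig Z)) as [wz Hwz].
            destruct HY as [HY|HY]; destruct HZ as [HZ|HZ].
            - destruct (Htot Y Z HY HZ) as [H|H].
              + exists wz; split; auto.
              + exists wy; split; auto.
            - exists wy; split; auto. rewrite HZ. apply (g_sub _ _ (proj2_sig Y)); auto.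
            - exists wz; split; auto. rewrite HY. apply (g_sub _ _ (proj2_sig Z)); auto.
            - exists wz; split; auto. rewrite HY. apply (g_sub _ _ (proj2_sig Z)); auto. }
          destruct Hc as [w [Hw1 Hw2]].
          apply Rle_trans with (d p w + d w q). apply dtri.
          apply Rplus_le_compat. apply (Hp w Hw1). rewrite dsym; apply (Hq w Hw2).
        + exists z. split.
          * apply ad0. intros c r Hc.
            apply (Hz (exist _ (c, r) (ex_intro _ (exist _ A0 (Build_good A0 A0 ad0 inv0 (ex_intro _ a0 Ha0) (fun x H => H)))
               (conj (or_intror eq_refl) Hc)))).
          * intros Y HYc. destruct Y as [Y GY]; simpl.
            apply (g_adm _ _ GY). intros c r Hc.
            apply (Hz (exist _ (c, r) (ex_intro _ (exist _ Y GY) (conj (or_introl HYc) Hc)))).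
      - intros x [Hx _]; exact Hx. }
    exists (exist _ B GB). intros Y HY x [_ Hx]. apply Hx; exact HY.
  - simpl in Hmin. destruct GA as [adA invA [a0 Ha0] subA].
    set (A' := fun z => forall c r, (forall a, A a -> d c (T a) <= r) -> d c z <= r).
    assert (HA'A : forall z, A' z -> A z).
    { intros z Hz. apply adA. intros c r Hc. apply Hz. intros a Ha. apply Hc. auto. }
    assert (GA' : good A0 A').
    { split.
      - intros z Hz c r Hc. apply Hz. intros a Ha. apply Ha; exact Hc.
      - intros a Ha c r Hc. apply Hc. auto.
      - exists (T a0). intros c r Hc. auto.
      - intros x Hx; auto. }
    pose proof (Hmin (exist _ A' GA') HA'A) as HAA'.
    simpl in HAA'.
    set (E := fun t => exists a b, A a /\ A b /\ t = d a b).
    destruct (completeness E) as [D [HDub HDl]].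
    { destruct Hbdd as [Bd HB]. exists Bd. intros t [a [b [_ [_ ->]]]]. apply HB. }
    { exists (d a0 a0). exists a0, a0. auto. }
    assert (HD : forall a b, A a -> A b -> d a b <= D).
    { intros a b Ha Hb. apply HDub. exists a, b; auto. }
    assert (HD0 : 0 <= D). { apply Rle_trans with (d a0 a0). apply dpos. auto. }
    set (C := fun z => A z /\ forall a, A a -> d a z <= D / 2).
    assert (GC : good A0 C).
    { split.
      - intros z Hz. split.
        + apply adA. intros c r Hc. apply Hz. intros a [Ha _]. auto.
        + intros a Ha. apply Hz. intros b [_ Hb]. auto.
      - intros x [Hx Hx2]. split. auto.
        intros a Ha. rewrite dsym. apply (HAA' a Ha). intros b Hb.
        apply T_le. intro n. rewrite dsym. apply Hx2. apply iter_inv; auto.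
      - destruct (hyp_adm A {a | A a} (fun p => proj1_sig p) (fun _ => D / 2) adA
                   (ex_intro _ a0 Ha0)) as [z [Hz1 Hz2]].
        + intros [a Ha] [b Hb]; simpl. apply Rle_trans with D. auto. lra.
        + intros [a Ha] c' r' Hc'; simpl. rewrite dsym.
          apply Rle_trans with r'. auto. lra.
        + exists z. split; auto. intros a Ha. apply (Hz2 (exist _ a Ha)).
      - intros x [Hx _]; auto. }
    assert (HCA : forall x, A x -> C x).
    { apply (Hmin (exist _ C GC)). intros x [Hx _]; exact Hx. }
    assert (HDD : D <= D / 2).
    { apply HDl. intros t [a [b [Ha [Hb ->]]]]. apply (HCA b Hb). auto. }
    exists a0. split. auto.
    apply dzero. apply Rle_antisym. 2: apply dpos.
    apply Rle_trans with D. apply HD; auto. lra.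
Qed.
End Main.

Theorem corollary2p2 (M : Type) (d : M -> M -> R) (T : M -> M)
  (Hmet : is_metric d) (Hbdd : bounded_metric d) (Hhyp : hyperconvex d)
  (HT : orbitally_wrt_nonexpansive d T) :
  (exists x, fixed_points T x) /\ hyperconvex_in d (fixed_points T).
Proof.
  assert (Hfix : forall (Ix : Type) (c : Ix -> M) (r : Ix -> R),
    (forall i, T (c i) = c i) -> (forall i j, d (c i) (c j) <= r i + r j) ->
    exists z, T z = z /\ forall i, d (c i) z <= r i).
  { intros Ix c r Hc Hij.
    set (A0 := fun z => forall i, d (c i) z <= r i).
    destruct (fixed_in M d T Hmet Hhyp Hbdd HT A0) as [p [Hp1 Hp2]].
    - split.
      + intros z Hz i. apply Hz. intros a Ha. apply Ha.
      + intros z Hz i. rewrite (dsym M d Hmet), <- (Hc i). apply (T_le M d T HT).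
        intro n. assert (Nat.iter n T (c i) = c i) as ->.
        { induction n; simpl; [reflexivity| rewrite IHn; apply Hc]. }
        rewrite (dsym M d Hmet). apply Hz.
      + destruct (Hhyp Ix c r) as [z [_ Hz]]. intros; exact I. exact Hij.
        exists z; exact Hz.
      + intros x Hx; exact Hx.
    - exists p; split; auto. }
  split.
  - destruct (Hfix False (fun f => match f with end) (fun f => match f with end))
      as [z [Hz _]]; try (intros []).
    exists z; exact Hz.
  - intros Ix c r Hc Hij. destruct (Hfix Ix c r Hc Hij) as [z [Hz1 Hz2]].
    exists z; split; [exact Hz1 | exact Hz2].
Qed.
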